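(* Let $\Gamma$ be a chain of loops: vertices $w_0,\dots,w_r$ where consecutive vertices $w_{j-1},w_j$ are joined by two parallel edges of equal length, so that the $j$-th loop has length $\lambda_j$. Suppose the distinct loop lengths occurring are $L_1,\dots,L_m$, with $L_i$ occurring $n_i$ times, and let $L=\sum_j\lambda_j$ be the total length. Then the eigenfrequencies $k$ (eigenvalues $k^2$) of $\mathbf{L}(\Gamma)$ with standard vertex conditions are: $0$ with multiplicity one; $2\pi N/L$ with multiplicity one for each positive integer $N$; and $2\pi N/L_i$ with multiplicity $n_i$ for each $i$ and each positive integer $N$ (multiplicities adding when these values coincide). Equivalently the secular equation is $\Sigma(k)=\left(-1+e^{ikL}\right)\prod_{i=1}^m\left(-1+e^{iL_ik}\right)^{n_i}$. In particular the spectrum does not depend on the order of the loops in the chain. *)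

(* Defs.v *)
From Stdlib Require Import Reals Lra List ClassicalEpsilon.
From Coquelicot Require Import Coquelicot.
Open Scope R_scope.

Definition rsum (d : nat) (g : nat -> R) : R :=
  fold_right Rplus 0 (map g (seq 0 d)).

Definition nsum (d : nat) (g : nat -> nat) : nat :=
  fold_right Nat.add 0%nat (map g (seq 0 d)).

Definition ind (P : Prop) : nat :=
  if excluded_middle_informative P then 1%nat else 0%nat.

(* Vertices w_0,...,w_r; loop j joins w_j and w_(j+1) by two parallel edges
   (j,true) and (j,false), each of length lam j / 2, parametrised by
   x in [0, lam j / 2] with x = 0 at w_j and x = lam j / 2 at w_(j+1).
   A function on the graph is f : nat -> bool -> R -> R, f j a being the
   function on edge (j,a). *)
Definition elen (lam : nat -> R) (j : nat) : R := lam j / 2.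

Definition edge_eig (mu l : R) (g : R -> R) (d0 d1 : R) : Prop :=
  (forall x, 0 < x < l ->
     ex_derive g x /\ ex_derive (Derive g) x /\
     - Derive (Derive g) x = mu * g x) /\
  filterlim g (at_right 0) (locally (g 0)) /\
  filterlim g (at_left l) (locally (g l)) /\
  filterlim (Derive g) (at_right 0) (locally d0) /\
  filterlim (Derive g) (at_left l) (locally d1).

(* f is a solution of the eigenvalue problem  -f'' = mu f  with standard
   vertex conditions (f = 0 is allowed; eigenvectors are the nonzero ones). *)
Definition is_eigfun (r : nat) (lam : nat -> R) (mu : R)
    (f : nat -> bool -> R -> R) : Prop :=
  exists D0 D1 : nat -> bool -> R,
    (forall j a, (j < r)%nat -> edge_eig mu (elen lam j) (f j a) (D0 j a) (D1 j a)) /\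
    (forall j a b, (j < r)%nat ->
        f j a 0 = f j b 0 /\ f j a (elen lam j) = f j b (elen lam j)) /\
    (forall j a b, (S j < r)%nat -> f j a (elen lam j) = f (S j) b 0) /\
    (* Kirchhoff: sum of outgoing derivatives vanishes at each vertex w_v *)
    (forall v, (v <= r)%nat ->
        (if Nat.ltb v r then D0 v true + D0 v false else 0)
        - (if Nat.ltb 0 v then D1 (pred v) true + D1 (pred v) false else 0) = 0).

Definition indep (r : nat) (lam : nat -> R) (d : nat)
    (F : nat -> nat -> bool -> R -> R) : Prop :=
  forall c : nat -> R,
    (forall j a x, (j < r)%nat -> 0 <= x <= elen lam j ->
        rsum d (fun i => c i * F i j a x) = 0) ->
    forall i, (i < d)%nat -> c i = 0.

(* mu is an eigenvalue of multiplicity d (d = 0: not an eigenvalue), i.e. the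
   solution space has dimension exactly d. *)
Definition has_mult (r : nat) (lam : nat -> R) (mu : R) (d : nat) : Prop :=
  (exists F, (forall i, (i < d)%nat -> is_eigfun r lam mu (F i)) /\ indep r lam d F) /\
  (forall F, (forall i, (i < S d)%nat -> is_eigfun r lam mu (F i)) ->
     ~ indep r lam (S d) F).

Definition pred_mult (r : nat) (lam : nat -> R) (k : R) : nat :=
  Nat.add (Nat.add (ind (k = 0))
     (ind (exists N : nat, (1 <= N)%nat /\ k * rsum r lam = 2 * PI * INR N)))
   (nsum r (fun j => ind (exists N : nat, (1 <= N)%nat /\ k * lam j = 2 * PI * INR N))).

(* Main.v *)
Require Import Defs.
From Stdlib Require Import Reals.
From Coquelicot Require Import Coquelicot.
From Stdlib Require Import Lra Lia List ClassicalEpsilon Classical FunctionalExtensionality ZArith.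
Import Defs.
Open Scope R_scope.

Lemma ev_right0 l : 0 < l -> at_right 0 (fun x => 0 < x < l).
Proof.
  intros Hl. exists (mkposreal l Hl). intros y Hy Hy0. simpl in Hy.
  unfold ball in Hy; simpl in Hy; unfold AbsRing_ball, abs, minus, plus, opp in Hy; simpl in Hy.
  apply Rabs_lt_between in Hy. lra.
Qed.

Lemma ev_leftl l : 0 < l -> at_left l (fun x => 0 < x < l).
Proof.
  intros Hl. exists (mkposreal l Hl). intros y Hy Hy0. simpl in Hy.
  unfold ball in Hy; simpl in Hy; unfold AbsRing_ball, abs, minus, plus, opp in Hy; simpl in Hy.
  apply Rabs_lt_between in Hy. lra.
Qed.

Lemma const_open (F : R -> R) a b : (forall t, a < t < b -> is_derive F t 0) ->
  forall x y, a < x < b -> a < y < b -> F x = F y.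
Proof.
  intros HD x y Hx Hy. destruct (Rtotal_order x y) as [H|[H|H]].
  - apply eq_is_derive; [intros t Ht; apply HD; lra | exact H].
  - subst; reflexivity.
  - symmetry; apply eq_is_derive; [intros t Ht; apply HD; lra | exact H].
Qed.

Lemma is_derive_eq (f : R -> R) x l l' : is_derive f x l -> l = l' -> is_derive f x l'.
Proof. intros H ->; exact H. Qed.

Lemma cont_right (h : R -> R) x : ex_derive h x -> filterlim h (at_right x) (locally (h x)).
Proof.
  intros H. eapply filterlim_filter_le_1.
  - apply filter_le_within.
  - apply (ex_derive_continuous h x H).
Qed.

Lemma cont_left (h : R -> R) x : ex_derive h x -> filterlim h (at_left x) (locally (h x)).
Proof.
  intros H. eapply filterlim_filter_le_1.
  - apply filter_le_within.
  - apply (ex_derive_continuous h x H).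
Qed.

Lemma ode_rep (mu l : R) (c c1 s s1 g : R -> R) (d0 d1 : R) :
  0 < l ->
  (forall x, is_derive c x (c1 x)) -> (forall x, is_derive c1 x (- mu * c x)) ->
  (forall x, is_derive s x (s1 x)) -> (forall x, is_derive s1 x (- mu * s x)) ->
  (forall x, c x * s1 x - c1 x * s x = 1) ->
  c 0 = 1 -> s 0 = 0 -> c1 0 = 0 -> s1 0 = 1 ->
  edge_eig mu l g d0 d1 ->
  (forall x, 0 <= x <= l -> g x = g 0 * c x + d0 * s x) /\ d1 = g 0 * c1 l + d0 * s1 l.
Proof.
  intros Hl dc dc1 ds ds1 W c0 s0 c10 s10 [Hode [Hg0 [Hgl [Hd0 Hd1]]]].
  set (Q := fun x => g x * s1 x - Derive g x * s x).
  set (P := fun x => Derive g x * c x - g x * c1 x).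
  assert (HQ : forall t, 0 < t < l -> is_derive Q t 0).
  { intros t Ht. destruct (Hode t Ht) as [e1 [e2 e3]].
    eapply is_derive_eq.
    - exact (is_derive_minus _ _ t _ _
        (is_derive_mult g s1 t _ _ (Derive_correct _ _ e1) (ds1 t) Rmult_comm)
        (is_derive_mult (Derive g) s t _ _ (Derive_correct _ _ e2) (ds t) Rmult_comm)).
    - unfold minus, plus, opp, mult; simpl.
      assert (Derive (Derive g) t = - (mu * g t)) as -> by lra. ring. }
  assert (HP : forall t, 0 < t < l -> is_derive P t 0).
  { intros t Ht. destruct (Hode t Ht) as [e1 [e2 e3]].
    eapply is_derive_eq.
    - exact (is_derive_minus _ _ t _ _
        (is_derive_mult (Derive g) c t _ _ (Derive_correct _ _ e2) (dc t) Rmult_comm)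
        (is_derive_mult g c1 t _ _ (Derive_correct _ _ e1) (dc1 t) Rmult_comm)).
    - unfold minus, plus, opp, mult; simpl.
      assert (Derive (Derive g) t = - (mu * g t)) as -> by lra. ring. }
  set (m := l / 2).
  assert (Hm : 0 < m < l) by (unfold m; lra).
  set (h := fun x => Q m * c x + P m * s x).
  set (h1 := fun x => Q m * c1 x + P m * s1 x).
  assert (Hrep : forall x, 0 < x < l -> h x = g x /\ h1 x = Derive g x).
  { intros x Hx. unfold h, h1.
    rewrite (const_open Q 0 l HQ m x Hm Hx), (const_open P 0 l HP m x Hm Hx).
    unfold Q, P. split.
    - transitivity (g x * (c x * s1 x - c1 x * s x)); [ring | rewrite W; ring].
    - transitivity (Derive g x * (c x * s1 x - c1 x * s x)); [ring | rewrite W; ring]. }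
  assert (Dh : forall x, ex_derive h x).
  { intros x. exists (Q m * c1 x + P m * s1 x). unfold h.
    exact (is_derive_plus (fun y => Q m * c y) (fun y => P m * s y) x _ _
      (is_derive_scal c x (Q m) _ (dc x)) (is_derive_scal s x (P m) _ (ds x))). }
  assert (Dh1 : forall x, ex_derive h1 x).
  { intros x. exists (Q m * (- mu * c x) + P m * (- mu * s x)). unfold h1.
    exact (is_derive_plus (fun y => Q m * c1 y) (fun y => P m * s1 y) x _ _
      (is_derive_scal c1 x (Q m) _ (dc1 x)) (is_derive_scal s1 x (P m) _ (ds1 x))). }
  assert (E0 : g 0 = h 0).
  { apply (@filterlim_locally_unique _ _ _ (at_right 0) _ g); [exact Hg0|].
    apply (filterlim_ext_loc h g).
    - eapply filter_imp; [|apply (ev_right0 l Hl)]. intros x Hx; apply Hrep; exact Hx.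
    - apply cont_right, Dh. }
  assert (El : g l = h l).
  { apply (@filterlim_locally_unique _ _ _ (at_left l) _ g); [exact Hgl|].
    apply (filterlim_ext_loc h g).
    - eapply filter_imp; [|apply (ev_leftl l Hl)]. intros x Hx; apply Hrep; exact Hx.
    - apply cont_left, Dh. }
  assert (F0 : d0 = h1 0).
  { apply (@filterlim_locally_unique _ _ _ (at_right 0) _ (Derive g)); [exact Hd0|].
    apply (filterlim_ext_loc h1 (Derive g)).
    - eapply filter_imp; [|apply (ev_right0 l Hl)]. intros x Hx; apply Hrep; exact Hx.
    - apply cont_right, Dh1. }
  assert (Fl : d1 = h1 l).
  { apply (@filterlim_locally_unique _ _ _ (at_left l) _ (Derive g)); [exact Hd1|].
    apply (filterlim_ext_loc h1 (Derive g)).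
    - eapply filter_imp; [|apply (ev_leftl l Hl)]. intros x Hx; apply Hrep; exact Hx.
    - apply cont_left, Dh1. }
  assert (Hg0' : g 0 = Q m) by (rewrite E0; unfold h; rewrite c0, s0; ring).
  assert (Hd0' : d0 = P m) by (rewrite F0; unfold h1; rewrite c10, s10; ring).
  split.
  - intros x Hx. rewrite Hg0', Hd0'.
    destruct (Req_dec x 0) as [->|Hx0]; [rewrite c0, s0, <- Hg0'; ring|].
    destruct (Req_dec x l) as [->|Hxl]; [exact El|].
    symmetry; apply Hrep; lra.
  - rewrite Fl, Hg0', Hd0'. reflexivity.
Qed.


Lemma fold_Rplus_acc (l : list R) a : fold_right Rplus a l = fold_right Rplus 0 l + a.
Proof. induction l; simpl; [ring | rewrite IHl; ring]. Qed.

Lemma rsum_S n g : rsum (S n) g = rsum n g + g n.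
Proof.
  unfold rsum. rewrite seq_S, map_app, fold_right_app. simpl.
  rewrite fold_Rplus_acc. ring.
Qed.

Lemma rsum_O g : rsum 0 g = 0.
Proof. reflexivity. Qed.

Lemma rsum_ext n f g : (forall i, (i < n)%nat -> f i = g i) -> rsum n f = rsum n g.
Proof.
  induction n; intros H; [reflexivity|]. rewrite !rsum_S, IHn, H; [reflexivity|lia|].
  intros; apply H; lia.
Qed.

Lemma rsum_plus n f g : rsum n (fun i => f i + g i) = rsum n f + rsum n g.
Proof. induction n; [simpl; unfold rsum; simpl; ring|]. rewrite !rsum_S, IHn; ring. Qed.

Lemma rsum_minus n f g : rsum n (fun i => f i - g i) = rsum n f - rsum n g.
Proof. induction n; [simpl; unfold rsum; simpl; ring|]. rewrite !rsum_S, IHn; ring. Qed.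

Lemma rsum_scal n a f : rsum n (fun i => a * f i) = a * rsum n f.
Proof. induction n; [simpl; unfold rsum; simpl; ring|]. rewrite !rsum_S, IHn; ring. Qed.

Lemma rsum_zero n f : (forall i, (i < n)%nat -> f i = 0) -> rsum n f = 0.
Proof.
  induction n; intros H; [reflexivity|]. rewrite rsum_S, IHn, H; [ring|lia|].
  intros; apply H; lia.
Qed.

Lemma rsum_single n f i0 : (i0 < n)%nat -> (forall i, (i < n)%nat -> i <> i0 -> f i = 0) ->
  rsum n f = f i0.
Proof.
  induction n; intros Hi H; [lia|]. rewrite rsum_S.
  destruct (Nat.eq_dec i0 n) as [->|Hne].
  - rewrite rsum_zero; [ring|]. intros i Hi'; apply H; lia.
  - rewrite IHn, (H n); [ring|lia|lia|lia|]. intros i Hi' Hne'; apply H; lia.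
Qed.

Lemma rsum_swap n m (g : nat -> nat -> R) :
  rsum n (fun i => rsum m (fun t => g i t)) = rsum m (fun t => rsum n (fun i => g i t)).
Proof.
  induction n.
  - rewrite rsum_O. symmetry; apply rsum_zero; intros; reflexivity.
  - rewrite rsum_S, IHn. rewrite <- rsum_plus. apply rsum_ext; intros; rewrite rsum_S; reflexivity.
Qed.

Lemma rsum_shift n g : rsum (S n) g = g 0%nat + rsum n (fun i => g (S i)).
Proof.
  induction n; [unfold rsum; simpl; ring|].
  rewrite rsum_S, IHn, rsum_S. ring.
Qed.

Lemma nsum_S n g : nsum (S n) g = (nsum n g + g n)%nat.
Proof.
  unfold nsum. rewrite seq_S, map_app, fold_right_app. simpl.
  generalize (map g (seq 0 n)). intros l. induction l; simpl; lia.
Qed.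

Lemma nsum_shift n g : nsum (S n) g = (g 0%nat + nsum n (fun i => g (S i)))%nat.
Proof.
  induction n; [unfold nsum; simpl; lia|].
  rewrite nsum_S, IHn, nsum_S. lia.
Qed.

Lemma ind_true (P : Prop) : P -> ind P = 1%nat.
Proof. intros H; unfold ind; destruct excluded_middle_informative; tauto. Qed.

Lemma ind_false (P : Prop) : ~ P -> ind P = 0%nat.
Proof. intros H; unfold ind; destruct excluded_middle_informative; tauto. Qed.

Lemma nsum_ext n f g : (forall i, (i < n)%nat -> f i = g i) -> nsum n f = nsum n g.
Proof.
  induction n; intros H; [reflexivity|]. rewrite !nsum_S, IHn, H; [reflexivity|lia|].
  intros; apply H; lia.
Qed.

Lemma nsum_remove (K : nat -> Prop) n i0 : (i0 < n)%nat -> K i0 ->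
  (nsum n (fun i => ind (K i /\ i <> i0)) + 1 = nsum n (fun i => ind (K i)))%nat.
Proof.
  induction n; intros Hi HK; [lia|]. rewrite !nsum_S.
  destruct (Nat.eq_dec i0 n) as [->|Hne].
  - rewrite (ind_false (K n /\ n <> n)) by tauto. rewrite (ind_true (K n)) by tauto.
    rewrite (nsum_ext n (fun i => ind (K i /\ i <> n)) (fun i => ind (K i))); [lia|].
    intros i Hi'. unfold ind. destruct excluded_middle_informative; destruct excluded_middle_informative; try reflexivity.
    + tauto.
    + exfalso. apply n0. split; [exact k| lia].
  - rewrite <- (IHn) by (auto; lia).
    destruct (classic (K n)) as [Kn|Kn].
    + rewrite (ind_true (K n /\ n <> i0)) by (split; auto). rewrite (ind_true (K n)) by auto. lia.
    + rewrite (ind_false (K n /\ n <> i0)) by tauto. rewrite (ind_false (K n)) by auto. lia.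
Qed.

Lemma nsum_pos (K : nat -> Prop) n : (0 < nsum n (fun i => ind (K i)))%nat ->
  exists i, (i < n)%nat /\ K i.
Proof.
  induction n; intros H; [unfold nsum in H; simpl in H; lia|].
  rewrite nsum_S in H. destruct (classic (K n)) as [Hk|Hk]; [exists n; split; auto|].
  rewrite (ind_false _ Hk) in H. destruct IHn as [i [Hi Ki]]; [lia|]. exists i; split; auto.
Qed.

Lemma lin_dep (Act : nat -> Prop) M : forall n (e : nat -> nat -> R) (K : nat -> Prop),
  (forall i t, (i < n)%nat -> (t < M)%nat -> ~ Act t -> e i t = 0) ->
  (nsum M (fun t => ind (Act t)) < nsum n (fun i => ind (K i)))%nat ->
  exists c : nat -> R, (forall i, ~ K i -> c i = 0) /\
    (exists i, (i < n)%nat /\ K i /\ c i <> 0) /\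
    (forall t, (t < M)%nat -> rsum n (fun i => c i * e i t) = 0).
Proof.
  induction M as [|M IH]; intros n e K Hz Hc.
  - destruct (nsum_pos K n) as [i0 [Hi0 Ki0]]; [unfold nsum at 1 in Hc; simpl in Hc; lia|].
    exists (fun i => if Nat.eq_dec i i0 then 1 else 0). split; [|split].
    + intros i Ki. destruct Nat.eq_dec; [subst; tauto|reflexivity].
    + exists i0; split; [auto|split; auto]. destruct Nat.eq_dec; [lra|tauto].
    + intros; lia.
  - rewrite nsum_S in Hc. destruct (classic (Act M)) as [HA|HA].
    2:{ rewrite (ind_false _ HA) in Hc.
        destruct (IH n e K) as [c [H1 [H2 H3]]]; [intros; apply Hz; auto; lia | lia|].
        exists c; split; [auto|split; auto]. intros t Ht.
        destruct (Nat.eq_dec t M) as [->|Hne]; [|apply H3; lia].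
        apply rsum_zero; intros i Hi; rewrite Hz; [ring|auto|lia|auto]. }
    rewrite (ind_true _ HA) in Hc.
    destruct (classic (exists i0, (i0 < n)%nat /\ K i0 /\ e i0 M <> 0)) as [[i0 [Hi0 [Ki0 Hp]]]|Hno].
    2:{ destruct (IH n e K) as [c [H1 [H2 H3]]]; [intros; apply Hz; auto; lia | lia|].
        exists c; split; [auto|split; auto]. intros t Ht.
        destruct (Nat.eq_dec t M) as [->|Hne]; [|apply H3; lia].
        apply rsum_zero; intros i Hi.
        destruct (classic (K i)) as [Ki|Ki].
        - destruct (Req_dec (e i M) 0) as [E|E]; [rewrite E; ring|].
          exfalso; apply Hno; exists i; auto.
        - rewrite H1; [ring|auto]. }
    set (p := e i0 M).
    set (f := fun i t => e i t - e i M / p * e i0 t).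
    set (K' := fun i => K i /\ i <> i0).
    destruct (IH n f K') as [c' [H1 [H2 H3]]].
    { intros i t Hi Ht HAt. unfold f. rewrite (Hz i t), (Hz i0 t); auto; try lia. unfold Rdiv; ring. }
    { pose proof (nsum_remove K n i0 Hi0 Ki0). unfold K'. lia. }
    set (sv := rsum n (fun i => c' i * e i M) / p).
    exists (fun i => c' i - (if Nat.eq_dec i i0 then sv else 0)). split; [|split].
    + intros i Ki. destruct Nat.eq_dec; [subst; tauto|]. rewrite H1; [ring|unfold K'; tauto].
    + destruct H2 as [i [Hi [Ki Hci]]]. exists i. split; [auto|split; [apply Ki|]].
      destruct Nat.eq_dec; [unfold K' in Ki; tauto|]. lra.
    + intros t Ht.
      assert (Hsplit : rsum n (fun i => (c' i - (if Nat.eq_dec i i0 then sv else 0)) * e i t)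
        = rsum n (fun i => c' i * e i t) - sv * e i0 t).
      { assert (Hs : rsum n (fun i => (if Nat.eq_dec i i0 then sv else 0) * e i t) = sv * e i0 t).
        { rewrite (rsum_single n _ i0 Hi0).
          - destruct Nat.eq_dec; [reflexivity|tauto].
          - intros i Hi Hne; destruct Nat.eq_dec; [tauto|ring]. }
        rewrite <- Hs, <- rsum_minus. apply rsum_ext; intros; ring. }
      rewrite Hsplit.
      destruct (Nat.eq_dec t M) as [->|Hne].
      * unfold sv. fold p. unfold Rdiv; rewrite Rmult_assoc, Rinv_l; [ring|exact Hp].
      * assert (H3t := H3 t ltac:(lia)). unfold f in H3t.
        rewrite (rsum_ext n _ (fun i => c' i * e i t - (e i0 t / p) * (c' i * e i M))) in H3t
          by (intros; unfold Rdiv; ring).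
        rewrite rsum_minus, rsum_scal in H3t. unfold sv. unfold Rdiv in *. lra.
Qed.


Lemma enum_act (Act : nat -> Prop) M : exists sg : nat -> nat,
  (forall i, (i < nsum M (fun t => ind (Act t)))%nat -> (sg i < M)%nat /\ Act (sg i)) /\
  (forall i i', (i < nsum M (fun t => ind (Act t)))%nat -> (i' < nsum M (fun t => ind (Act t)))%nat ->
     sg i = sg i' -> i = i').
Proof.
  induction M as [|M [sg [H1 H2]]].
  - exists (fun i => i). unfold nsum; simpl. split; intros; lia.
  - destruct (classic (Act M)) as [HA|HA].
    + set (d := nsum M (fun t => ind (Act t))) in *.
      exists (fun i => if Nat.eq_dec i d then M else sg i).
      rewrite nsum_S, (ind_true _ HA). fold d. split.
      * intros i Hi. destruct Nat.eq_dec; [split; auto; lia|].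
        destruct (H1 i); [lia|split; auto; lia].
      * intros i i' Hi Hi'. destruct Nat.eq_dec; destruct Nat.eq_dec; try lia.
        -- intros E. destruct (H1 i'); lia.
        -- intros E. destruct (H1 i); lia.
        -- apply H2; lia.
    + exists sg. rewrite nsum_S, (ind_false _ HA), Nat.add_0_r. split.
      * intros i Hi. destruct (H1 i Hi); split; auto.
      * exact H2.
Qed.

Lemma nsum_true n : nsum n (fun _ => ind True) = n.
Proof. induction n; [reflexivity|]. rewrite nsum_S, IHn, ind_true; [lia|exact I]. Qed.

Lemma rsum_scal_r n a f : rsum n (fun i => f i * a) = rsum n f * a.
Proof. rewrite (rsum_ext n _ (fun i => a * f i)) by (intros; ring). rewrite rsum_scal; ring. Qed.

Lemma abstract_dim r lam mu M (Act : nat -> Prop) (B : nat -> nat -> bool -> R -> R) :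
  (forall t, (t < M)%nat -> Act t -> is_eigfun r lam mu (B t)) ->
  (forall f, is_eigfun r lam mu f -> exists e : nat -> R,
     (forall t, (t < M)%nat -> ~ Act t -> e t = 0) /\
     forall j a x, (j < r)%nat -> 0 <= x <= elen lam j ->
       f j a x = rsum M (fun t => e t * B t j a x)) ->
  (forall e : nat -> R, (forall t, (t < M)%nat -> ~ Act t -> e t = 0) ->
     (forall j a x, (j < r)%nat -> 0 <= x <= elen lam j -> rsum M (fun t => e t * B t j a x) = 0) ->
     forall t, (t < M)%nat -> Act t -> e t = 0) ->
  has_mult r lam mu (nsum M (fun t => ind (Act t))).
Proof.
  intros H1 H2 H3. set (d := nsum M (fun t => ind (Act t))). split.
  - destruct (enum_act Act M) as [sg [Hs Hinj]]. fold d in Hs, Hinj.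
    exists (fun i => B (sg i)). split.
    + intros i Hi. apply H1; apply Hs; auto.
    + intros c Hc i Hi.
      set (e := fun t => rsum d (fun i => if Nat.eq_dec (sg i) t then c i else 0)).
      assert (He0 : forall t, (t < M)%nat -> ~ Act t -> e t = 0).
      { intros t Ht HA. apply rsum_zero. intros i' Hi'. destruct Nat.eq_dec as [E|E]; [|reflexivity].
        exfalso. apply HA. rewrite <- E. apply Hs; auto. }
      assert (Hsum : forall j a x, (j < r)%nat -> 0 <= x <= elen lam j ->
                rsum M (fun t => e t * B t j a x) = 0).
      { intros j a x Hj Hx. rewrite <- (Hc j a x Hj Hx).
        unfold e. rewrite (rsum_ext M _ (fun t => rsum d (fun i =>
           (if Nat.eq_dec (sg i) t then c i else 0) * B t j a x))) by (intros; rewrite rsum_scal_r; reflexivity).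
        rewrite rsum_swap. apply rsum_ext. intros i' Hi'.
        rewrite (rsum_single M _ (sg i')).
        - destruct Nat.eq_dec; [reflexivity|tauto].
        - apply Hs; auto.
        - intros t Ht Hne. destruct Nat.eq_dec; [congruence|ring]. }
      assert (Hes := H3 e He0 Hsum (sg i) (proj1 (Hs i Hi)) (proj2 (Hs i Hi))).
      unfold e in Hes. rewrite (rsum_single d _ i) in Hes; auto.
      * destruct Nat.eq_dec; [exact Hes|tauto].
      * intros i' Hi' Hne. destruct Nat.eq_dec as [E|E]; [|reflexivity].
        exfalso; apply Hne; apply Hinj; auto.
  - intros F HF Hind.
    assert (Hex : forall i, exists e : nat -> R, (i < S d)%nat ->
       (forall t, (t < M)%nat -> ~ Act t -> e t = 0) /\
       forall j a x, (j < r)%nat -> 0 <= x <= elen lam j ->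
         F i j a x = rsum M (fun t => e t * B t j a x)).
    { intros i. destruct (Compare_dec.lt_dec i (S d)) as [Hi|Hi].
      - destruct (H2 (F i) (HF i Hi)) as [e He]. exists e; intros; exact He.
      - exists (fun _ => 0). intros; lia. }
    set (E := fun i => proj1_sig (constructive_indefinite_description _ (Hex i))).
    assert (HE : forall i, (i < S d)%nat ->
       (forall t, (t < M)%nat -> ~ Act t -> E i t = 0) /\
       forall j a x, (j < r)%nat -> 0 <= x <= elen lam j ->
         F i j a x = rsum M (fun t => E i t * B t j a x)).
    { intros i Hi. unfold E. destruct constructive_indefinite_description as [e He]. simpl. apply He, Hi. }
    destruct (lin_dep Act M (S d) E (fun _ => True)) as [c [_ [[i0 [Hi0 [_ Hc0]]] Hc]]].
    { intros i t Hi Ht HA. apply (proj1 (HE i Hi)); auto. }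
    { rewrite nsum_true. fold d. lia. }
    apply Hc0. apply (Hind c); auto.
    intros j a x Hj Hx.
    rewrite (rsum_ext (S d) _ (fun i => rsum M (fun t => c i * E i t * B t j a x))).
    + rewrite rsum_swap. apply rsum_zero. intros t Ht.
      rewrite rsum_scal_r, Hc; [ring|auto].
    + intros i Hi. rewrite (proj2 (HE i Hi) j a x Hj Hx), <- rsum_scal.
      apply rsum_ext; intros; ring.
Qed.


Lemma structure r lam (mu : R) (c c1 s s1 : R -> R) f :
  (0 < r)%nat -> (forall j, (j < r)%nat -> 0 < lam j) ->
  (forall x, is_derive c x (c1 x)) -> (forall x, is_derive c1 x (- mu * c x)) ->
  (forall x, is_derive s x (s1 x)) -> (forall x, is_derive s1 x (- mu * s x)) ->
  (forall x, c x * s1 x - c1 x * s x = 1) ->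
  c 0 = 1 -> s 0 = 0 -> c1 0 = 0 -> s1 0 = 1 ->
  (forall P x, c (P + x) = c P * c x + c1 P * s x) ->
  (forall P x, c1 (P + x) = c P * c1 x + c1 P * s1 x) ->
  is_eigfun r lam mu f ->
  exists (al : R) (dl : nat -> R),
    (forall j a x, (j < r)%nat -> 0 <= x <= elen lam j ->
       f j a x = al * c (rsum j (elen lam) + x) + (if a then dl j else - dl j) * s x) /\
    al * c1 (rsum r (elen lam)) = 0 /\
    (forall j, (j < r)%nat -> dl j * s (elen lam j) = 0).
Proof.
  intros hr hlam dc dc1 ds ds1 W c0 s0 c10 s10 addc addc1 [D0 [D1 [He [Hc [Hc2 Hk]]]]].
  assert (Hl : forall j, (j < r)%nat -> 0 < elen lam j) by (intros j Hj; unfold elen; specialize (hlam j Hj); lra).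
  assert (Hode : forall j a, (j < r)%nat ->
     (forall x, 0 <= x <= elen lam j -> f j a x = f j a 0 * c x + D0 j a * s x) /\
     D1 j a = f j a 0 * c1 (elen lam j) + D0 j a * s1 (elen lam j)).
  { intros j a Hj. apply (ode_rep mu (elen lam j) c c1 s s1); auto. }
  set (al := f 0%nat true 0).
  set (dl := fun j => (D0 j true - D0 j false) / 2).
  set (sg := fun j => (D0 j true + D0 j false) / 2).
  set (P := fun j => rsum j (elen lam)).
  assert (HA : forall j, (j < r)%nat -> f j false 0 = f j true 0).
  { intros j Hj. apply (Hc j false true Hj). }
  assert (Hclaim : forall j, (j < r)%nat -> f j true 0 = al * c (P j) /\ sg j = al * c1 (P j)).
  { induction j as [|j IH]; intros Hj.
    - unfold P; rewrite rsum_O, c0, c10. split; [unfold al; ring|].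
      specialize (Hk 0%nat ltac:(lia)).
      replace (Nat.ltb 0 r) with true in Hk by (symmetry; apply Nat.ltb_lt; lia).
      simpl in Hk. unfold sg. lra.
    - destruct (IH ltac:(lia)) as [IA IS].
      set (l := elen lam j) in *.
      destruct (Hode j true ltac:(lia)) as [Ot Dt]. destruct (Hode j false ltac:(lia)) as [Of Df].
      rewrite (HA j ltac:(lia)) in Of, Df.
      assert (Pt := Ot l ltac:(unfold l; specialize (Hl j ltac:(lia)); lra)).
      assert (Pf := Of l ltac:(unfold l; specialize (Hl j ltac:(lia)); lra)).
      assert (Ct := Hc2 j true true Hj). assert (Cf := Hc2 j false true Hj).
      fold l in Ct, Cf.
      assert (HPS : P (S j) = P j + l) by (unfold P, l; rewrite rsum_S; reflexivity).
      rewrite HPS, addc, addc1.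
      assert (Esum : D0 j true + D0 j false = 2 * (al * c1 (P j))) by (rewrite <- IS; unfold sg; field).
      split.
      + assert (E1 : 2 * f (S j) true 0 = 2 * f j true 0 * c l + (D0 j true + D0 j false) * s l) by lra.
        rewrite Esum, IA in E1. apply Rmult_eq_reg_l with 2; [rewrite E1; ring | lra].
      + specialize (Hk (S j) ltac:(lia)).
        replace (Nat.ltb (S j) r) with true in Hk by (symmetry; apply Nat.ltb_lt; lia).
        replace (Nat.ltb 0 (S j)) with true in Hk by (symmetry; apply Nat.ltb_lt; lia).
        simpl pred in Hk. fold l in Hk. rewrite Dt, Df in Hk.
        unfold l in *. assert (E1 : D0 (S j) true + D0 (S j) false = 2 * f j true 0 * c1 (elen lam j) + (D0 j true + D0 j false) * s1 (elen lam j)) by (rewrite Rmult_plus_distr_r; lra).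
        rewrite Esum, IA in E1. unfold sg. rewrite E1. field. }
  exists al, dl. split; [|split].
  - intros j a x Hj Hx. destruct (Hclaim j Hj) as [IA IS].
    destruct (Hode j a Hj) as [O _]. rewrite (O x Hx).
    fold (P j). rewrite addc.
    replace (f j a 0) with (f j true 0) by (destruct a; [reflexivity|symmetry; apply HA; auto]).
    rewrite IA.
    assert (D0 j a = sg j + (if a then dl j else - dl j)) as -> by (destruct a; unfold sg, dl; field).
    rewrite IS. ring.
  - destruct r as [|r']; [lia|].
    destruct (Hclaim r' ltac:(lia)) as [IA IS].
    destruct (Hode r' true ltac:(lia)) as [_ Dt]. destruct (Hode r' false ltac:(lia)) as [_ Df].
    rewrite (HA r' ltac:(lia)) in Df.
    specialize (Hk (S r') ltac:(lia)).
    replace (Nat.ltb (S r') (S r')) with false in Hk by (symmetry; apply Nat.ltb_irrefl).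
    replace (Nat.ltb 0 (S r')) with true in Hk by (symmetry; apply Nat.ltb_lt; lia).
    simpl pred in Hk. rewrite Dt, Df in Hk.
    fold (P (S r')). assert (HPS : P (S r') = P r' + elen lam r') by (unfold P; rewrite rsum_S; reflexivity).
    rewrite HPS, addc1.
    assert (Esum : D0 r' true + D0 r' false = 2 * (al * c1 (P r'))) by (rewrite <- IS; unfold sg; field).
    assert (E1 : 2 * f r' true 0 * c1 (elen lam r') + (D0 r' true + D0 r' false) * s1 (elen lam r') = 0) by lra.
    rewrite Esum, IA in E1. apply Rmult_eq_reg_l with 2; [rewrite Rmult_0_r, <- E1; ring | lra].
  - intros j Hj. destruct (Hode j true Hj) as [Ot _]. destruct (Hode j false Hj) as [Of _].
    assert (Hx : 0 <= elen lam j <= elen lam j) by (specialize (Hl j Hj); lra).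
    assert (E := proj2 (Hc j true false Hj)).
    rewrite (Ot _ Hx), (Of _ Hx), (HA j Hj) in E. unfold dl. unfold Rdiv.
    assert ((D0 j true - D0 j false) * s (elen lam j) = 0) by lra. nra.
Qed.


Lemma d_cos k x : is_derive (fun x => cos (k * x)) x (- k * sin (k * x)).
Proof. auto_derive; [exact I|ring]. Qed.
Lemma d_msin k x : is_derive (fun x => - k * sin (k * x)) x (- (k ^ 2) * cos (k * x)).
Proof. auto_derive; [exact I|ring]. Qed.
Lemma d_sink k x : k <> 0 -> is_derive (fun x => sin (k * x) / k) x (cos (k * x)).
Proof. intros Hk. auto_derive; [exact I|field; exact Hk]. Qed.
Lemma d_cos2 k x : k <> 0 -> is_derive (fun x => cos (k * x)) x (- (k ^ 2) * (sin (k * x) / k)).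
Proof. intros Hk. auto_derive; [exact I|field; exact Hk]. Qed.

Lemma cos_struct r lam k f : (0 < r)%nat -> (forall j, (j < r)%nat -> 0 < lam j) -> k <> 0 ->
  is_eigfun r lam (k ^ 2) f ->
  exists (al : R) (dl : nat -> R),
    (forall j a x, (j < r)%nat -> 0 <= x <= elen lam j ->
       f j a x = al * cos (k * (rsum j (elen lam) + x)) + (if a then dl j else - dl j) * (sin (k * x) / k)) /\
    al * (- k * sin (k * rsum r (elen lam))) = 0 /\
    (forall j, (j < r)%nat -> dl j * (sin (k * elen lam j) / k) = 0).
Proof.
  intros hr hlam hk Hf.
  apply (structure r lam (k ^ 2) (fun x => cos (k * x)) (fun x => - k * sin (k * x))
     (fun x => sin (k * x) / k) (fun x => cos (k * x))); auto.
  - intros; apply d_cos.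
  - intros; apply d_msin.
  - intros; apply d_sink; auto.
  - intros; apply d_cos2; auto.
  - intros x. pose proof (sin2_cos2 (k * x)) as H. unfold Rsqr in H.
    transitivity (sin (k * x) * sin (k * x) + cos (k * x) * cos (k * x)); [field; auto|lra].
  - rewrite Rmult_0_r, cos_0; reflexivity.
  - rewrite Rmult_0_r, sin_0; unfold Rdiv; ring.
  - rewrite Rmult_0_r, sin_0; ring.
  - rewrite Rmult_0_r, cos_0; reflexivity.
  - intros P x. rewrite Rmult_plus_distr_l, cos_plus. field; auto.
  - intros P x. rewrite Rmult_plus_distr_l, sin_plus. ring.
Qed.

Lemma is_derive_c0 (a x v : R) : v = 0 -> is_derive (fun _ => a) x v.
Proof. intros ->. apply (is_derive_const a x). Qed.

Lemma lin_struct r lam f : (0 < r)%nat -> (forall j, (j < r)%nat -> 0 < lam j) ->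
  is_eigfun r lam (0 ^ 2) f ->
  exists (al : R) (dl : nat -> R),
    (forall j a x, (j < r)%nat -> 0 <= x <= elen lam j ->
       f j a x = al * 1 + (if a then dl j else - dl j) * x) /\
    al * 0 = 0 /\
    (forall j, (j < r)%nat -> dl j * elen lam j = 0).
Proof.
  intros hr hlam Hf.
  apply (structure r lam (0 ^ 2) (fun _ => 1) (fun _ => 0) (fun x => x) (fun _ => 1)); auto.
  - intros x; apply is_derive_c0; reflexivity.
  - intros x; apply is_derive_c0; ring.
  - intros x; apply (is_derive_id x).
  - intros x; apply is_derive_c0; ring.
  - intros; ring.
  - intros; ring.
  - intros; ring.
Qed.

Definition ch q x := (exp (q * x) + exp (- (q * x))) / 2.
Definition sh q x := (exp (q * x) - exp (- (q * x))) / 2.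

Lemma exp_inv a : exp a * exp (- a) = 1.
Proof. rewrite <- exp_plus, Rplus_opp_r, exp_0. reflexivity. Qed.

Lemma hyp_struct r lam mu f : (0 < r)%nat -> (forall j, (j < r)%nat -> 0 < lam j) -> mu < 0 ->
  is_eigfun r lam mu f ->
  exists (al : R) (dl : nat -> R),
    (forall j a x, (j < r)%nat -> 0 <= x <= elen lam j ->
       f j a x = al * ch (sqrt (- mu)) (rsum j (elen lam) + x) + (if a then dl j else - dl j) * (sh (sqrt (- mu)) x / sqrt (- mu))) /\
    al * (sqrt (- mu) * sh (sqrt (- mu)) (rsum r (elen lam))) = 0 /\
    (forall j, (j < r)%nat -> dl j * (sh (sqrt (- mu)) (elen lam j) / sqrt (- mu)) = 0).
Proof.
  intros hr hlam hmu Hf. set (q := sqrt (- mu)).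
  assert (hq : 0 < q) by (apply sqrt_lt_R0; lra).
  assert (hq2 : mu = - (q * q)) by (unfold q; rewrite sqrt_sqrt; lra).
  apply (structure r lam mu (ch q) (fun x => q * sh q x) (fun x => sh q x / q) (ch q)); auto.
  - intros x; unfold ch, sh; auto_derive; [exact I|field].
  - intros x; unfold ch, sh; auto_derive; [exact I|rewrite hq2; field].
  - intros x; unfold ch, sh; auto_derive; [exact I|field; lra].
  - intros x; unfold ch, sh; auto_derive; [exact I|rewrite hq2; field; lra].
  - intros x; unfold ch, sh. pose proof (exp_inv (q * x)).
    transitivity (exp (q * x) * exp (- (q * x))); [field; lra| auto].
  - unfold ch; rewrite Rmult_0_r, Ropp_0, exp_0; field.
  - unfold sh; rewrite Rmult_0_r, Ropp_0, exp_0; unfold Rdiv; ring.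
  - unfold sh; rewrite Rmult_0_r, Ropp_0, exp_0; unfold Rdiv; ring.
  - unfold ch; rewrite Rmult_0_r, Ropp_0, exp_0; field.
  - intros P x. unfold ch, sh. rewrite Rmult_plus_distr_l, Ropp_plus_distr, !exp_plus. field; lra.
  - intros P x. unfold ch, sh. rewrite Rmult_plus_distr_l, Ropp_plus_distr, !exp_plus. field; lra.
Qed.


Lemma edge_eig_of (mu l : R) (g g1 : R -> R) :
  (forall x, is_derive g x (g1 x)) -> (forall x, is_derive g1 x (- mu * g x)) ->
  edge_eig mu l g (g1 0) (g1 l).
Proof.
  intros dg dg1.
  assert (E : Derive g = g1) by (apply functional_extensionality; intros x; apply is_derive_unique, dg).
  assert (Ex : forall x, ex_derive g x) by (intros x; exists (g1 x); apply dg).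
  assert (Ex1 : forall x, ex_derive g1 x) by (intros x; exists (- mu * g x); apply dg1).
  split; [|split; [|split; [|split]]].
  - intros x _. rewrite E. split; [apply Ex|split; [apply Ex1|]].
    rewrite (is_derive_unique _ _ _ (dg1 x)). ring.
  - apply cont_right, Ex.
  - apply cont_left, Ex.
  - rewrite E. apply cont_right, Ex1.
  - rewrite E. apply cont_left, Ex1.
Qed.

Lemma sin_INR_PI N : sin (PI * INR N) = 0.
Proof. apply sin_eq_0_1. exists (Z.of_nat N). rewrite <- INR_IZR_INZ. ring. Qed.

Lemma sin_zero_pos y : 0 < y -> sin y = 0 -> exists N, (1 <= N)%nat /\ y = PI * INR N.
Proof.
  intros Hy Hs. destruct (sin_eq_0_0 y Hs) as [z Hz].
  assert (Hz0 : (0 < z)%Z).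
  { apply lt_IZR. pose proof PI_RGT_0. subst y. destruct (Rle_or_lt (IZR z) 0); [|auto].
    exfalso. assert (IZR z * PI <= 0) by (apply Rmult_le_0_r; lra). lra. }
  exists (Z.to_nat z). split; [lia|]. rewrite INR_IZR_INZ, Z2Nat.id by lia. rewrite Hz; ring.
Qed.

Lemma rsum_elen r lam : rsum r (elen lam) = rsum r lam / 2.
Proof. induction r; [unfold rsum; simpl; field|]. rewrite !rsum_S, IHr. unfold elen; field. Qed.

Lemma rsum_pos r (g : nat -> R) : (0 < r)%nat -> (forall j, (j < r)%nat -> 0 < g j) -> 0 < rsum r g.
Proof.
  induction r; intros Hr Hg; [lia|]. rewrite rsum_S.
  destruct r; [rewrite rsum_O; specialize (Hg 0%nat ltac:(lia)); lra|].
  specialize (IHr ltac:(lia) ltac:(intros; apply Hg; lia)). specialize (Hg (S r) ltac:(lia)). lra.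
Qed.

Definition Sym (k : R) (lam : nat -> R) (j : nat) (a : bool) (x : R) : R :=
  cos (k * (rsum j (elen lam) + x)).
Definition Anti (k : R) (j0 j : nat) (a : bool) (x : R) : R :=
  if Nat.eqb j j0 then (if a then sin (k * x) else - sin (k * x)) else 0.
Definition Bas (k : R) (lam : nat -> R) (t : nat) : nat -> bool -> R -> R :=
  match t with O => Sym k lam | S j => Anti k j end.
Definition Act (k : R) (lam : nat -> R) (r : nat) (t : nat) : Prop :=
  match t with
  | O => k = 0 \/ exists N : nat, (1 <= N)%nat /\ k * rsum r lam = 2 * PI * INR N
  | S j => exists N : nat, (1 <= N)%nat /\ k * lam j = 2 * PI * INR N
  end.

Lemma Sym_eig r lam k : (0 < r)%nat -> Act k lam r 0 -> is_eigfun r lam (k ^ 2) (Sym k lam).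
Proof.
  intros hr HA.
  exists (fun j _ => - k * sin (k * (rsum j (elen lam) + 0))),
         (fun j _ => - k * sin (k * (rsum j (elen lam) + elen lam j))).
  assert (Hend : sin (k * (rsum r (elen lam))) = 0).
  { destruct HA as [->|[N [HN HL]]]; [rewrite Rmult_0_l; apply sin_0|].
    rewrite rsum_elen. replace (k * (rsum r lam / 2)) with (PI * INR N) by lra. apply sin_INR_PI. }
  split; [|split; [|split]].
  - intros j a Hj. unfold Sym.
    apply (edge_eig_of (k ^ 2) (elen lam j) (fun x => cos (k * (rsum j (elen lam) + x)))
       (fun x => - k * sin (k * (rsum j (elen lam) + x)))).
    + intros x; auto_derive; [exact I|ring].
    + intros x; auto_derive; [exact I|ring].
  - intros; split; reflexivity.
  - intros j a b Hj. unfold Sym. rewrite rsum_S, Rplus_0_r. reflexivity.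
  - intros v Hv. destruct v as [|v].
    + replace (Nat.ltb 0 r) with true by (symmetry; apply Nat.ltb_lt; lia). simpl.
      rewrite rsum_O, !Rplus_0_r, Rmult_0_r, sin_0. ring.
    + replace (Nat.ltb 0 (S v)) with true by (symmetry; apply Nat.ltb_lt; lia). simpl pred.
      rewrite rsum_S.
      destruct (Nat.ltb (S v) r) eqn:E.
      * rewrite Rplus_0_r. ring.
      * apply Nat.ltb_ge in E. assert (S v = r) as <- by lia.
        rewrite rsum_S in Hend. rewrite Hend. ring.
Qed.

Lemma Anti_eig r lam k j0 : Act k lam r (S j0) -> is_eigfun r lam (k ^ 2) (Anti k j0).
Proof.
  intros [N [HN HL]].
  assert (Hz : sin (k * elen lam j0) = 0).
  { unfold elen. replace (k * (lam j0 / 2)) with (PI * INR N) by lra. apply sin_INR_PI. }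
  assert (V0 : forall j a, Anti k j0 j a 0 = 0).
  { intros j a; unfold Anti. destruct (Nat.eqb j j0); [destruct a; rewrite Rmult_0_r, sin_0; ring|reflexivity]. }
  assert (Vl : forall j a, Anti k j0 j a (elen lam j) = 0).
  { intros j a; unfold Anti. destruct (Nat.eqb j j0) eqn:E; [|reflexivity].
    apply Nat.eqb_eq in E; subst. destruct a; rewrite Hz; ring. }
  exists (fun j (a : bool) => if Nat.eqb j j0 then (if a then k * cos (k * 0) else - (k * cos (k * 0))) else 0),
         (fun j (a : bool) => if Nat.eqb j j0 then (if a then k * cos (k * elen lam j) else - (k * cos (k * elen lam j))) else 0).
  split; [|split; [|split]].
  - intros j a Hj. unfold Anti. destruct (Nat.eqb j j0); [destruct a|].
    + apply (edge_eig_of (k ^ 2) (elen lam j) (fun x => sin (k * x)) (fun x => k * cos (k * x)));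
        intros x; auto_derive; try exact I; ring.
    + apply (edge_eig_of (k ^ 2) (elen lam j) (fun x => - sin (k * x)) (fun x => - (k * cos (k * x))));
        intros x; auto_derive; try exact I; ring.
    + apply (edge_eig_of (k ^ 2) (elen lam j) (fun x => 0) (fun x => 0));
        intros x; apply is_derive_c0; ring.
  - intros j a b Hj. rewrite !V0, !Vl. split; reflexivity.
  - intros j a b Hj. rewrite V0, Vl. reflexivity.
  - intros v Hv.
    destruct (Nat.ltb v r); destruct (Nat.ltb 0 v); simpl;
    destruct (Nat.eqb v j0); destruct (Nat.eqb (pred v) j0); ring.
Qed.


Lemma ind_or (P Q : Prop) : ~ (P /\ Q) -> ind (P \/ Q) = (ind P + ind Q)%nat.
Proof.
  intros H. unfold ind.
  destruct (excluded_middle_informative (P \/ Q)); destruct (excluded_middle_informative P);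
  destruct (excluded_middle_informative Q); tauto || reflexivity.
Qed.

Lemma pred_mult_eq r lam k : pred_mult r lam k = nsum (S r) (fun t => ind (Act k lam r t)).
Proof.
  rewrite nsum_shift. unfold pred_mult. simpl Act. rewrite ind_or. reflexivity.
  intros [-> [N [HN HL]]]. assert (1 <= INR N) by (apply (le_INR 1); lia).
  pose proof PI_RGT_0. nra.
Qed.

Lemma exp_gt y : 0 < y -> exp (- y) < exp y.
Proof. intros; apply exp_increasing; lra. Qed.

Lemma sh_pos q y : 0 < q -> 0 < y -> 0 < sh q y.
Proof. intros; unfold sh. pose proof (exp_gt (q * y) ltac:(nra)). lra. Qed.

Theorem mainTheorem6 (r : nat) (lam : nat -> R)
  (hr : (0 < r)%nat) (hlam : forall j, (j < r)%nat -> 0 < lam j) :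
  (forall mu, mu < 0 -> has_mult r lam mu 0) /\
  (forall k, 0 <= k -> has_mult r lam (k ^ 2) (pred_mult r lam k)).
Proof.
  assert (Hel : forall j, (j < r)%nat -> 0 < elen lam j) by (intros j Hj; unfold elen; specialize (hlam j Hj); lra).
  assert (HPr : 0 < rsum r (elen lam)) by (apply rsum_pos; auto).
  split.
  - intros mu hmu.
    refine (abstract_dim r lam mu 0 (fun _ => False) (fun _ _ _ _ => 0) _ _ _).
    + intros; lia.
    + intros f Hf. destruct (hyp_struct r lam mu f hr hlam hmu Hf) as [al [dl [Hrep [Hal Hdl]]]].
      set (q := sqrt (- mu)) in *. assert (hq : 0 < q) by (apply sqrt_lt_R0; lra).
      assert (Hal0 : al = 0).
      { pose proof (sh_pos q _ hq HPr). destruct (Rmult_integral _ _ Hal) as [|H0]; [auto|nra]. }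
      exists (fun _ => 0). split; [intros; lia|]. intros j a x Hj Hx. rewrite rsum_O, Hrep by auto.
      assert (Hd : dl j = 0).
      { pose proof (sh_pos q _ hq (Hel j Hj)). destruct (Rmult_integral _ _ (Hdl j Hj)) as [|H0]; [auto|].
        exfalso. assert (0 < sh q (elen lam j) / q) by (apply Rdiv_lt_0_compat; auto). lra. }
      rewrite Hal0, Hd. destruct a; ring.
    + intros; lia.
  - intros k hk. rewrite pred_mult_eq. apply (abstract_dim r lam (k ^ 2) (S r) (Act k lam r) (Bas k lam)).
    + intros t Ht HA. destruct t; [apply Sym_eig; auto | apply Anti_eig; auto].
    + intros f Hf. destruct (Req_dec k 0) as [Hk0|Hk0].
      * subst k. destruct (lin_struct r lam f hr hlam Hf) as [al [dl [Hrep [_ Hdl]]]].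
        exists (fun t => match t with O => al | S _ => 0 end). split.
        -- intros t Ht HA. destruct t; [exfalso; apply HA; left; reflexivity|reflexivity].
        -- intros j a x Hj Hx. rewrite rsum_shift, rsum_zero by (intros; ring).
           assert (Hd : dl j = 0).
           { destruct (Rmult_integral _ _ (Hdl j Hj)) as [|H]; [auto|specialize (Hel j Hj); lra]. }
           rewrite Hrep, Hd by auto. simpl Bas. unfold Sym. rewrite Rmult_0_l, cos_0. destruct a; ring.
      * assert (kp : 0 < k) by lra.
        destruct (cos_struct r lam k f hr hlam Hk0 Hf) as [al [dl [Hrep [Hal Hdl]]]].
        exists (fun t => match t with O => al | S j => dl j / k end). split.
        -- intros t Ht HA. destruct t as [|j].
           ++ destruct (Req_dec al 0) as [|Hne]; [auto|exfalso].
              assert (Hs : sin (k * rsum r (elen lam)) = 0).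
              { destruct (Rmult_integral _ _ Hal) as [|H]; [tauto|].
                destruct (Rmult_integral _ _ H) as [H'|H']; [lra|exact H']. }
              destruct (sin_zero_pos (k * rsum r (elen lam)) (Rmult_lt_0_compat _ _ kp HPr) Hs) as [N [HN HE]].
              apply HA; right; exists N; split; auto. rewrite rsum_elen in HE. lra.
           ++ destruct (Req_dec (dl j) 0) as [E|Hne]; [rewrite E; unfold Rdiv; ring|exfalso].
              assert (Hs : sin (k * elen lam j) = 0).
              { destruct (Rmult_integral _ _ (Hdl j ltac:(lia))) as [|H]; [tauto|].
                unfold Rdiv in H. destruct (Rmult_integral _ _ H) as [H'|H']; [exact H'|].
                exfalso; apply (Rinv_neq_0_compat k Hk0 H'). }
              destruct (sin_zero_pos (k * elen lam j) (Rmult_lt_0_compat _ _ kp (Hel j ltac:(lia))) Hs) as [N [HN HE]].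
              apply HA; exists N; split; auto. unfold elen in HE. lra.
        -- intros j a x Hj Hx. rewrite rsum_shift, Hrep by auto.
           rewrite (rsum_single r _ j Hj).
           ++ simpl Bas. unfold Sym, Anti. rewrite Nat.eqb_refl. destruct a; field; auto.
           ++ intros i Hi Hne. simpl Bas. unfold Anti.
              replace (Nat.eqb j i) with false by (symmetry; apply Nat.eqb_neq; auto). ring.
    + intros e He Hs t Ht HA.
      assert (HA1 : forall j, (j < r)%nat -> e (S j) = 0).
      { intros j Hj. destruct (classic (Act k lam r (S j))) as [A|A]; [|apply He; auto; lia].
        destruct A as [N [HN HL]].
        assert (HNr : 1 <= INR N) by (apply (le_INR 1); lia).
        pose proof PI_RGT_0. specialize (Hel j Hj). unfold elen in Hel.
        assert (kp : 0 < k).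
        { destruct (Req_dec k 0) as [E|E]; [rewrite E in HL; nra|lra]. }
        set (x0 := PI / (2 * k)).
        assert (Hx0 : 0 <= x0 <= elen lam j).
        { unfold x0, elen. split; [apply Rlt_le, Rdiv_lt_0_compat; lra|].
          apply Rmult_le_reg_l with (2 * k); [lra|]. field_simplify; [|lra]. nra. }
        assert (Hsin : sin (k * x0) = 1).
        { unfold x0. replace (k * (PI / (2 * k))) with (PI / 2) by (field; lra). apply sin_PI2. }
        pose proof (Hs j true x0 Hj Hx0) as T. pose proof (Hs j false x0 Hj Hx0) as F.
        rewrite rsum_shift, (rsum_single r _ j Hj) in T.
        2: intros i Hi Hne; simpl Bas; unfold Anti;
             replace (Nat.eqb j i) with false by (symmetry; apply Nat.eqb_neq; auto); ring.
        rewrite rsum_shift, (rsum_single r _ j Hj) in F.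
        2: intros i Hi Hne; simpl Bas; unfold Anti;
             replace (Nat.eqb j i) with false by (symmetry; apply Nat.eqb_neq; auto); ring.
        simpl Bas in T, F. unfold Anti in T, F. rewrite Nat.eqb_refl in T, F.
        unfold Sym in T, F. rewrite Hsin in T, F. lra. }
      destruct t as [|j]; [|apply HA1; lia].
      pose proof (Hs 0%nat true 0 hr ltac:(specialize (Hel 0%nat hr); lra)) as T.
      rewrite rsum_shift, rsum_zero in T.
      * simpl Bas in T. unfold Sym in T. rewrite rsum_O, !Rplus_0_r, Rmult_0_r, cos_0 in T. lra.
      * intros i Hi. rewrite HA1; [ring|auto].
Qed.
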